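(* The following are equivalent: (1) $J_\omega[\aleph_2]=\{S\subseteq\aleph_2\mid S\cap S^2_1\text{ is nonstationary}\}$; (2) $J_\omega[\aleph_2]\neq\mathrm{NS}_{\aleph_2}$; (3) $m(\aleph_0,\aleph_0,\aleph_0,\aleph_0)=\aleph_1$; (4) $\mathfrak b=\aleph_1$.
   Context: $S^2_1=\{\alpha<\aleph_2\mid\mathrm{cf}(\alpha)=\aleph_1\}$; $\mathrm{NS}_{\aleph_2}$ is the nonstationary ideal; $\mathfrak b$ is the bounding number. For a set $\Delta$, cardinal $\lambda$, infinite regular $\theta\le|\Delta|$ and $\chi$ equal to $2$ or an infinite cardinal, $m(\Delta,\lambda,\theta,\chi)$ is the least size of a family $\mathcal H$ of functions from $\Delta$ to $[\lambda]^{<\chi}$ such that for every $X\in[\Delta]^\theta$ and every $g:X\to\lambda$ there is $h\in\mathcal H$ with $|\{\xi\in X\mid g(\xi)\in h(\xi)\}|=\theta$. For regular uncountable $\kappa$, $J_\omega[\kappa]$ is the collection of all $S\subseteq\kappa$ for which there exist a club $C\subseteq\kappa$ and functions $f_i:\kappa\to[\kappa]^{<\omega}$ ($i<\kappa$) such that for every $\alpha\in S\cap C$, every regressive $f:\alpha\to\alpha$ and every cofinal $B\subseteq\alpha$, there is $i<\alpha$ with $\sup\{\beta\in B\mid f(\beta)\in f_i(\beta)\}=\alpha$. *)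

(* Defs.v *)
From Stdlib Require Import List Arith.
Import ListNotations.

Definition is_wellorder {T : Type} (lt : T -> T -> Prop) : Prop :=
  (forall x, ~ lt x x) /\
  (forall x y z, lt x y -> lt y z -> lt x z) /\
  (forall x y, lt x y \/ x = y \/ lt y x) /\
  well_founded lt.

Definition injects_on {T U : Type} (A : T -> Prop) : Prop :=
  exists f : T -> U, forall x y, A x -> A y -> f x = f y -> x = y.

(* (T1, lt1) is (isomorphic to) omega_1: an uncountable well-order all of whose
   proper initial segments are countable *)
Definition omega1_like {T1 : Type} (lt1 : T1 -> T1 -> Prop) : Prop :=
  is_wellorder lt1 /\
  ~ (@injects_on T1 nat (fun _ => True)) /\
  (forall a, @injects_on T1 nat (fun x => lt1 x a)).

(* (T2, lt2) is (isomorphic to) omega_2, given T1 of size aleph_1: a well-order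
   of size > aleph_1 all of whose proper initial segments have size <= aleph_1 *)
Definition omega2_like (T1 : Type) {T2 : Type} (lt2 : T2 -> T2 -> Prop) : Prop :=
  is_wellorder lt2 /\
  ~ (@injects_on T2 T1 (fun _ => True)) /\
  (forall a, @injects_on T2 T1 (fun x => lt2 x a)).

Section Kappa.
Context {T1 : Type} (lt1 : T1 -> T1 -> Prop) {T2 : Type} (lt2 : T2 -> T2 -> Prop).

Definition le2 (x y : T2) : Prop := lt2 x y \/ x = y.

Definition cof_omega1 (alpha : T2) : Prop :=
  exists h : T1 -> T2,
    (forall x y, lt1 x y -> lt2 (h x) (h y)) /\
    (forall x, lt2 (h x) alpha) /\
    (forall d, lt2 d alpha -> exists x, le2 d (h x)).

Definition S21 (alpha : T2) : Prop := cof_omega1 alpha.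

Definition sup_is (X : T2 -> Prop) (alpha : T2) : Prop :=
  forall d, lt2 d alpha -> exists b, X b /\ lt2 d b /\ lt2 b alpha.

Definition club (C : T2 -> Prop) : Prop :=
  (forall x, exists y, C y /\ lt2 x y) /\
  (forall alpha, (exists d, lt2 d alpha) -> sup_is C alpha -> C alpha).

Definition stationary (S : T2 -> Prop) : Prop :=
  forall C, club C -> exists x, S x /\ C x.

Definition nonstationary (S : T2 -> Prop) : Prop := ~ stationary S.

(* membership in J_omega[aleph_2]; [kappa]^{<omega} is modelled by lists *)
Definition J_omega (S : T2 -> Prop) : Prop :=
  exists (C : T2 -> Prop) (F : T2 -> T2 -> list T2),
    club C /\
    forall alpha, S alpha -> C alpha ->
      forall (f : T2 -> T2),
        (forall b, lt2 b alpha -> (exists g, lt2 g b) -> lt2 (f b) b) ->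
      forall (B : T2 -> Prop),
        (forall b, B b -> lt2 b alpha) ->
        (forall d, lt2 d alpha -> exists b, B b /\ le2 d b) ->
        exists i, lt2 i alpha /\
          sup_is (fun b => B b /\ In (f b) (F i b)) alpha.

End Kappa.

Definition infinite_nat (X : nat -> Prop) : Prop :=
  forall n, exists k, n <= k /\ X k.

(* H witnesses m(aleph0,aleph0,aleph0,aleph0) <= |I| *)
Definition m_family {I : Type} (H : I -> nat -> list nat) : Prop :=
  forall (X : nat -> Prop) (g : nat -> nat), infinite_nat X ->
    exists i, infinite_nat (fun x => X x /\ In (g x) (H i x)).

Definition m_omega_eq_aleph1 (T1 : Type) : Prop :=
  (exists H : T1 -> nat -> list nat, m_family H) /\
  ~ (exists H : nat -> nat -> list nat, m_family H).

Definition le_star (f g : nat -> nat) : Prop :=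
  exists n, forall k, n <= k -> f k <= g k.

Definition unbounded_family {I : Type} (F : I -> nat -> nat) : Prop :=
  ~ exists g : nat -> nat, forall i, le_star (F i) g.

Definition b_eq_aleph1 (T1 : Type) : Prop :=
  (exists F : T1 -> nat -> nat, unbounded_family F) /\
  ~ (exists F : nat -> nat -> nat, unbounded_family F).

(* Main.v *)
Require Import Defs.
From Stdlib Require Import List Arith Lia Classical ClassicalEpsilon FunctionalExtensionality Cantor FinFun.
Import ListNotations.

Module Gen.

Definition Ctbl {T : Type} (A : T -> Prop) : Prop :=
  exists u : nat -> T, forall x, A x -> exists n, u n = x.

Lemma inj_ctbl {T} (A : T -> Prop) : inhabited T -> @injects_on T nat A -> Ctbl A.
Proof.
  intros inh [f Hf].
  exists (fun n => epsilon inh (fun x => A x /\ f x = n)).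
  intros x Ax. exists (f x).
  pose proof (epsilon_spec inh (fun y => A y /\ f y = f x) (ex_intro _ x (conj Ax eq_refl))) as [H1 H2].
  apply Hf; auto.
Qed.

Lemma ctbl_inj {T} (A : T -> Prop) : Ctbl A -> @injects_on T nat A.
Proof.
  intros [u Hu].
  exists (fun x => epsilon (inhabits 0) (fun n => u n = x)).
  intros x y Ax Ay E.
  pose proof (epsilon_spec (inhabits 0) (fun n => u n = x) (Hu x Ax)) as H1.
  pose proof (epsilon_spec (inhabits 0) (fun n => u n = y) (Hu y Ay)) as H2.
  simpl in *. rewrite <- H1, <- H2, E. reflexivity.
Qed.

Lemma ctbl_sub {T} (A B : T -> Prop) : Ctbl A -> (forall x, B x -> A x) -> Ctbl B.
Proof. intros [u Hu] H. exists u. intros; auto. Qed.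

Lemma ctbl_Union {T} (A : nat -> T -> Prop) : (forall n, Ctbl (A n)) -> Ctbl (fun x => exists n, A n x).
Proof.
  intros H.
  assert (HU : exists U : nat -> nat -> T, forall n x, A n x -> exists m, U n m = x).
  { destruct (choice (fun n (u : nat -> T) => forall x, A n x -> exists m, u m = x)) as [U HU].
    - intro n. destruct (H n) as [u Hu]. exists u. exact Hu.
    - exists U. exact HU. }
  destruct HU as [U HU].
  exists (fun k => U (fst (of_nat k)) (snd (of_nat k))).
  intros x [n Hn]. destruct (HU n x Hn) as [m Hm].
  exists (to_nat (n, m)). rewrite cancel_of_to. simpl. exact Hm.
Qed.

Lemma ctbl_image {T U} (A : T -> Prop) (g : T -> U) : Ctbl A -> Ctbl (fun y => exists x, A x /\ y = g x).
Proof.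
  intros [u Hu]. exists (fun n => g (u n)).
  intros y [x [Ax ->]]. destruct (Hu x Ax) as [n Hn]. exists n. now rewrite Hn.
Qed.

Lemma ctbl_UnionI {T I} (t0 : T) (P : I -> Prop) (A : I -> T -> Prop) :
  Ctbl P -> (forall i, P i -> Ctbl (A i)) -> Ctbl (fun x => exists i, P i /\ A i x).
Proof.
  intros [u Hu] H.
  apply ctbl_sub with (A := fun x => exists n, (fun n x => P (u n) /\ A (u n) x) n x).
  - apply ctbl_Union. intro n. destruct (classic (P (u n))) as [Hp|Hp].
    + apply ctbl_sub with (A := A (u n)); [apply H; auto | tauto].
    + exists (fun _ => t0). intros x [Hx _]. contradiction.
  - intros x [i [Pi Ai]]. destruct (Hu i Pi) as [n <-]. exists n. auto.
Qed.

Lemma ctbl_list {T} (d : T) (l : list T) : Ctbl (fun y => In y l).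
Proof.
  exists (fun n => nth n l d). intros y Hy.
  destruct (In_nth l y d Hy) as [n [_ Hn]]. eauto.
Qed.

Lemma ctbl_U2 {T} (A B : T -> Prop) : Ctbl A -> Ctbl B -> Ctbl (fun x => A x \/ B x).
Proof.
  intros HA HB. apply ctbl_sub with (A := fun x => exists n, (fun n => match n with 0 => A | _ => B end) n x).
  - apply ctbl_Union. intros [|n]; auto.
  - intros x [H|H]; [exists 0 | exists 1]; auto.
Qed.

Lemma ctbl_single {T} (a : T) : Ctbl (fun x => x = a).
Proof. exists (fun _ => a). intros x ->. exists 0. auto. Qed.

Lemma inj_comp {T U V} (A : T -> Prop) (B : U -> Prop) (g : T -> U) :
  (forall x y, A x -> A y -> g x = g y -> x = y) -> (forall x, A x -> B (g x)) ->
  @injects_on U V B -> @injects_on T V A.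
Proof.
  intros Hg HAB [h Hh]. exists (fun x => h (g x)). intros x y Ax Ay E.
  apply Hg; auto.
Qed.

Lemma inj_sub {T V} (A B : T -> Prop) : (forall x, A x -> B x) -> @injects_on T V B -> @injects_on T V A.
Proof. intros H [h Hh]. exists h. intros; auto. Qed.

Lemma wf_rec {T A : Type} (lt : T -> T -> Prop) (wf : well_founded lt) (a0 : A)
  (P : (T -> A) -> T -> A -> Prop)
  (Pext : forall f g x a, (forall y, lt y x -> f y = g y) -> P f x a -> P g x a) :
  exists F : T -> A, forall x, (exists a, P F x a) -> P F x (F x).
Proof.
  pose (ext := fun x (r : forall y, lt y x -> A) (y : T) =>
           match excluded_middle_informative (lt y x) with
           | left H => r y H | right _ => a0 end).
  pose (body := fun x (r : forall y, lt y x -> A) =>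
           epsilon (inhabits a0) (fun a => P (ext x r) x a)).
  pose (F := Fix wf (fun _ => A) body).
  exists F. intros x Hex.
  assert (HF : F x = body x (fun y _ => F y)).
  { unfold F. refine (Fix_eq wf (fun _ => A) body _ x). intros x' f g Hfg. unfold body.
    assert (E : ext x' f = ext x' g).
    { apply functional_extensionality. intro y. unfold ext.
      destruct (excluded_middle_informative (lt y x')); auto. }
    rewrite E. reflexivity. }
  assert (Hag : forall y, lt y x -> ext x (fun y _ => F y) y = F y).
  { intros y Hy. unfold ext. destruct (excluded_middle_informative (lt y x)); tauto. }
  rewrite HF. unfold body.
  apply Pext with (f := ext x (fun y _ => F y)); [exact Hag|].
  apply epsilon_spec. destruct Hex as [a Ha]. exists a.
  apply Pext with (f := F); auto. intros y Hy. symmetry. apply Hag; auto.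
Qed.

Definition listmax (l : list nat) : nat := fold_right max 0 l.

Lemma listmax_In x l : In x l -> x <= listmax l.
Proof.
  induction l as [|a l IH]; simpl; [tauto|]. intros [->|H]; [lia|]. specialize (IH H). lia.
Qed.

Lemma inj_unbounded (g : nat -> nat) : (forall n m, g n = g m -> n = m) ->
  forall N, exists n, N <= g n.
Proof.
  intros Hg N. apply NNPP. intro Hn.
  assert (Hlt : forall n, g n < N) by (intro n; apply Nat.nlt_ge; intro; apply Hn; exists n; lia).
  assert (ND : NoDup (map g (seq 0 (S N)))).
  { apply FinFun.Injective_map_NoDup; [intros a b; apply Hg | apply seq_NoDup]. }
  assert (Hincl : incl (map g (seq 0 (S N))) (seq 0 N)).
  { intros y Hy. apply in_map_iff in Hy. destruct Hy as [n [<- _]]. apply in_seq. specialize (Hlt n). lia. }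
  pose proof (NoDup_incl_length ND Hincl) as L. rewrite length_map, !length_seq in L. lia.
Qed.

End Gen.
Import Gen.

Module M1.

Lemma incr_lt {T} (lt : T -> T -> Prop) (tr : forall x y z, lt x y -> lt y z -> lt x z)
  (g : nat -> T) : (forall n, lt (g n) (g (S n))) -> forall n m, n < m -> lt (g n) (g m).
Proof.
  intros Hg n m Hnm. induction m as [|m IH]; [lia|].
  destruct (Nat.eq_dec n m) as [->|Hne]; [apply Hg|].
  apply tr with (g m); [apply IH; lia | apply Hg].
Qed.

Lemma incr_inj {T} (lt : T -> T -> Prop) (irr : forall x, ~ lt x x)
  (tr : forall x y z, lt x y -> lt y z -> lt x z)
  (g : nat -> T) : (forall n, lt (g n) (g (S n))) -> forall n m, g n = g m -> n = m.
Proof.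
  intros Hg n m E. destruct (lt_eq_lt_dec n m) as [[H|H]|H]; auto.
  - pose proof (incr_lt lt tr g Hg n m H) as L. rewrite E in L. now apply irr in L.
  - pose proof (incr_lt lt tr g Hg m n H) as L. rewrite E in L. now apply irr in L.
Qed.

Section One.
Variables (T1 : Type) (lt1 : T1 -> T1 -> Prop).
Hypothesis H1 : omega1_like lt1.

Lemma irr1 : forall x, ~ lt1 x x. Proof. apply H1. Qed.
Lemma tr1 : forall x y z, lt1 x y -> lt1 y z -> lt1 x z. Proof. apply H1. Qed.
Lemma tot1 : forall x y, lt1 x y \/ x = y \/ lt1 y x. Proof. apply H1. Qed.
Lemma wf1 : well_founded lt1. Proof. apply H1. Qed.

Lemma inh1 : inhabited T1.
Proof.
  apply NNPP. intro N. apply (proj1 (proj2 H1)). exists (fun _ => 0).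
  intros x. exfalso. apply N. exact (inhabits x).
Qed.

Lemma notctbl1 : ~ Ctbl (fun _ : T1 => True).
Proof. intro C. apply (proj1 (proj2 H1)). now apply ctbl_inj. Qed.

Lemma ctbl_lt1 : forall a, Ctbl (fun x => lt1 x a).
Proof. intro a. apply inj_ctbl; [apply inh1 | apply H1]. Qed.

Lemma bound1 : forall A : T1 -> Prop, Ctbl A -> exists z, forall x, A x -> lt1 x z.
Proof.
  intros A HA. apply NNPP. intro N. apply notctbl1.
  destruct HA as [u Hu].
  apply ctbl_sub with (A := fun x => exists n, (fun n x => lt1 x (u n) \/ x = u n) n x).
  - apply ctbl_Union. intro n. apply ctbl_U2; [apply ctbl_lt1 | apply ctbl_single].
  - intros x _. apply NNPP. intro Hx. apply N. exists x. intros y Ay.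
    destruct (Hu y Ay) as [n <-]. destruct (tot1 (u n) x) as [H|[H|H]]; auto;
    exfalso; apply Hx; exists n; auto.
Qed.

Definition succ1 (x : T1) : T1 := epsilon inh1 (fun y => lt1 x y).
Lemma succ1_gt : forall x, lt1 x (succ1 x).
Proof.
  intro x. unfold succ1. apply epsilon_spec.
  destruct (bound1 (fun y => y = x) (ctbl_single x)) as [z Hz]. exists z. auto.
Qed.

Lemma le_succ1 : forall x y, ~ lt1 y x -> lt1 x (succ1 y).
Proof.
  intros x y H. destruct (tot1 x y) as [h|[h|h]]; [| subst; apply succ1_gt | tauto].
  apply tr1 with y; auto. apply succ1_gt.
Qed.

Definition e1 (a : T1) : T1 -> nat :=
  epsilon (inhabits (fun _ : T1 => 0))
    (fun f => forall x y, lt1 x a -> lt1 y a -> f x = f y -> x = y).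
Lemma e1_inj : forall a x y, lt1 x a -> lt1 y a -> e1 a x = e1 a y -> x = y.
Proof.
  intro a. unfold e1. apply (epsilon_spec (inhabits (fun _ : T1 => 0))
    (fun f => forall x y, lt1 x a -> lt1 y a -> f x = f y -> x = y)).
  apply H1.
Qed.

Lemma pairing_nat : exists P : T1 -> nat -> T1,
  forall a n b m, P a n = P b m -> a = b /\ n = m.
Proof.
  destruct inh1 as [x0].
  destruct (wf_rec lt1 wf1 (fun _ => x0)
    (fun G xi g => (forall eta m n, lt1 eta xi -> lt1 (G eta m) (g n)) /\ forall n, lt1 (g n) (g (S n))))
    as [G HG].
  { intros f g x a Hfg [Ha Hb]. split; auto. intros eta m n Heta. rewrite <- Hfg; auto. }
  assert (HG' : forall xi, (forall eta m n, lt1 eta xi -> lt1 (G eta m) (G xi n)) /\ forall n, lt1 (G xi n) (G xi (S n))).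
  { intro xi. apply HG.
    destruct (bound1 (fun y => exists eta, lt1 eta xi /\ (fun eta y => exists m, y = G eta m) eta y)) as [b Hb].
    { apply ctbl_UnionI; [exact x0 | apply ctbl_lt1 |]. intros eta _. exists (G eta). intros y [m ->]. eauto. }
    exists (fun n => Nat.iter n succ1 b). split.
    - intros eta m n Heta. assert (L : lt1 (G eta m) b) by (apply Hb; eauto).
      destruct n as [|n]; [exact L|]. apply tr1 with b; auto.
      apply (incr_lt lt1 tr1 (fun n => Nat.iter n succ1 b)) with (n := 0); [|lia].
      intro k. simpl. apply succ1_gt.
    - intro n. simpl. apply succ1_gt. }
  exists G. intros a n b m E.
  destruct (tot1 a b) as [h|[h|h]].
  - exfalso. pose proof (proj1 (HG' b) a n m h) as L. rewrite E in L. now apply irr1 in L.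
  - subst. split; auto. apply (incr_inj lt1 irr1 tr1 (G b)); auto. apply HG'.
  - exfalso. pose proof (proj1 (HG' a) b m n h) as L. rewrite E in L. now apply irr1 in L.
Qed.

Definition Pn : T1 -> nat -> T1 :=
  epsilon (inhabits (fun (a : T1) (_ : nat) => a))
    (fun P => forall a n b m, P a n = P b m -> a = b /\ n = m).
Lemma Pn_inj : forall a n b m, Pn a n = Pn b m -> a = b /\ n = m.
Proof. unfold Pn. apply epsilon_spec. apply pairing_nat. Qed.

Definition mx1 (a b : T1) : T1 := if excluded_middle_informative (lt1 a b) then b else a.
Lemma mx1_ge : forall a b, ~ lt1 (mx1 a b) a /\ ~ lt1 (mx1 a b) b.
Proof.
  intros a b. unfold mx1. destruct (excluded_middle_informative (lt1 a b)) as [h|h].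
  - split; [intro; apply (irr1 a); eauto using tr1 | apply irr1].
  - split; [apply irr1|]. intro h'. destruct (tot1 a b) as [k|[k|k]]; [tauto| subst; now apply irr1 in h'|].
    apply (irr1 a). eauto using tr1.
Qed.

Definition code (a b : T1) : T1 :=
  Pn (mx1 a b) (to_nat (e1 (succ1 (mx1 a b)) a, e1 (succ1 (mx1 a b)) b)).
Lemma code_inj : forall a b c d, code a b = code c d -> a = c /\ b = d.
Proof.
  intros a b c d E. unfold code in E. apply Pn_inj in E. destruct E as [Em En].
  apply (f_equal of_nat) in En. rewrite !cancel_of_to in En. injection En as Ea Eb.
  rewrite Em in Ea, Eb.
  destruct (mx1_ge a b) as [Ha Hb]. destruct (mx1_ge c d) as [Hc Hd]. rewrite <- Em in Hc, Hd.
  rewrite <- Em in Ea, Eb.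
  split; eapply e1_inj; try eassumption; apply le_succ1; auto.
Qed.

End One.

End M1.
Import M1.

Module M2.

Section Two.
Variables (T1 : Type) (lt1 : T1 -> T1 -> Prop) (T2 : Type) (lt2 : T2 -> T2 -> Prop).
Hypothesis H1 : omega1_like lt1.
Hypothesis H2 : omega2_like T1 lt2.

Notation inh1 := (inh1 T1 lt1 H1).
Notation Pn := (Pn T1).
Notation code := (code T1 lt1 H1).

Lemma irr2 : forall x, ~ lt2 x x. Proof. apply H2. Qed.
Lemma tr2 : forall x y z, lt2 x y -> lt2 y z -> lt2 x z. Proof. apply H2. Qed.
Lemma tot2 : forall x y, lt2 x y \/ x = y \/ lt2 y x. Proof. apply H2. Qed.
Lemma wf2 : well_founded lt2. Proof. apply H2. Qed.

Lemma inh2 : inhabited T2.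
Proof.
  apply NNPP. intro N. apply (proj1 (proj2 H2)). destruct inh1 as [x0]. exists (fun _ => x0).
  intros x. exfalso. apply N. exact (inhabits x).
Qed.

Definition e2 (a : T2) : T2 -> T1 :=
  epsilon (inhabits (fun _ : T2 => epsilon inh1 (fun _ => True)))
    (fun f => forall x y, lt2 x a -> lt2 y a -> f x = f y -> x = y).
Lemma e2_inj : forall a x y, lt2 x a -> lt2 y a -> e2 a x = e2 a y -> x = y.
Proof.
  intro a. unfold e2. apply (epsilon_spec _
    (fun f => forall x y, lt2 x a -> lt2 y a -> f x = f y -> x = y)).
  apply H2.
Qed.

Lemma cover2 : forall v : T1 -> T2, ~ (forall y, exists xi, lt2 y (v xi) \/ y = v xi).
Proof.
  intros v Hc. apply (proj1 (proj2 H2)).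
  pose (xi := fun y => epsilon inh1 (fun xi => lt2 y (v xi) \/ y = v xi)).
  assert (Hxi : forall y, lt2 y (v (xi y)) \/ y = v (xi y)).
  { intro y. unfold xi. apply epsilon_spec. apply Hc. }
  exists (fun y => if excluded_middle_informative (y = v (xi y)) then Pn (xi y) 1
                   else Pn (code (xi y) (e2 (v (xi y)) y)) 0).
  intros x y _ _.
  destruct (excluded_middle_informative (x = v (xi x))) as [hx|hx];
  destruct (excluded_middle_informative (y = v (xi y))) as [hy|hy]; intro E;
  apply (Pn_inj T1 lt1 H1) in E; destruct E as [Ea En]; try discriminate.
  - rewrite hx, hy, Ea. reflexivity.
  - apply (code_inj T1 lt1 H1) in Ea. destruct Ea as [Ea Eb].
    assert (Lx : lt2 x (v (xi x))) by (destruct (Hxi x); tauto).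
    assert (Ly : lt2 y (v (xi y))) by (destruct (Hxi y); tauto).
    rewrite <- Ea in Eb, Ly. eapply e2_inj; eauto.
Qed.

Lemma bound2T1 : forall v : T1 -> T2, exists b, forall xi, lt2 (v xi) b.
Proof.
  intro v. apply NNPP. intro N. apply (cover2 v). intro y. apply NNPP. intro N2.
  apply N. exists y. intro xi. destruct (tot2 (v xi) y) as [h|[h|h]]; auto;
  exfalso; apply N2; exists xi; auto.
Qed.

Lemma bound2 : forall A : T2 -> Prop, Ctbl A -> exists b, forall x, A x -> lt2 x b.
Proof.
  intros A [u Hu]. destruct inh1 as [x0].
  pose (r := fun xi => epsilon (inhabits 0) (fun n => Pn x0 n = xi)).
  destruct (bound2T1 (fun xi => u (r xi))) as [b Hb].
  exists b. intros x Ax. destruct (Hu x Ax) as [n <-].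
  assert (E : r (Pn x0 n) = n).
  { unfold r. pose proof (epsilon_spec (inhabits 0) (fun m => Pn x0 m = Pn x0 n) (ex_intro _ n eq_refl)) as E.
    apply (Pn_inj T1 lt1 H1) in E. apply E. }
  specialize (Hb (Pn x0 n)). simpl in Hb. rewrite E in Hb. exact Hb.
Qed.

Lemma nomax2 : forall x, exists y, lt2 x y.
Proof.
  intro x. destruct (bound2 (fun y => y = x) (ctbl_single x)) as [b Hb]. eauto.
Qed.

Lemma iota_ex : exists io : T1 -> T2, forall a b, lt1 a b -> lt2 (io a) (io b).
Proof.
  destruct inh2 as [y0].
  destruct (wf_rec lt1 (wf1 T1 lt1 H1) y0 (fun f xi y => forall eta, lt1 eta xi -> lt2 (f eta) y)) as [io Hio].
  { intros f g x a Hfg H eta Heta. rewrite <- Hfg; auto. }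
  exists io. intros a b Hab. apply Hio; auto.
  destruct (bound2 (fun y => exists eta, lt1 eta b /\ y = io eta)) as [c Hc].
  { apply ctbl_image. apply (ctbl_lt1 T1 lt1 H1). }
  exists c. intros eta H. apply Hc. eauto.
Qed.

Definition io : T1 -> T2 :=
  epsilon (inhabits (fun _ : T1 => epsilon inh2 (fun _ => True)))
    (fun io => forall a b, lt1 a b -> lt2 (io a) (io b)).
Lemma io_mono : forall a b, lt1 a b -> lt2 (io a) (io b).
Proof. unfold io. apply epsilon_spec. apply iota_ex. Qed.
Lemma io_inj : forall a b, io a = io b -> a = b.
Proof.
  intros a b E. destruct (tot1 T1 lt1 H1 a b) as [h|[h|h]]; auto; apply io_mono in h;
  rewrite E in h; now apply irr2 in h.
Qed.

Definition gs : T2 := epsilon inh2 (fun b => forall xi, lt2 (io xi) b).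
Lemma io_gs : forall xi, lt2 (io xi) gs.
Proof. unfold gs. apply (epsilon_spec inh2 (fun b => forall xi, lt2 (io xi) b)). apply bound2T1. Qed.

Lemma unc : forall b, ~ lt2 b gs -> ~ Ctbl (fun y => lt2 y b).
Proof.
  intros b Hb C. apply (notctbl1 T1 lt1 H1).
  apply inj_ctbl; [exact inh1|].
  destruct (ctbl_inj _ C) as [h Hh]. exists (fun xi => h (io xi)).
  intros x y _ _ E. apply io_inj. apply Hh; auto.
  all: assert (L : forall xi, lt2 (io xi) b) by
    (intro xi; destruct (tot2 gs b) as [k|[k|k]]; [eapply tr2; [apply io_gs|exact k] | subst; apply io_gs | tauto]); auto.
Qed.

Definition dec (i : T2) : T1 := epsilon inh1 (fun xi => io xi = i).
Lemma dec_io : forall xi, dec (io xi) = xi.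
Proof.
  intro xi. unfold dec. apply io_inj.
  apply (epsilon_spec inh1 (fun a => io a = io xi)). eauto.
Qed.

End Two.

End M2.
Import M2.

Module M3.

Lemma wf_least {T} (lt : T -> T -> Prop) (wf : well_founded lt) (Q : T -> Prop) :
  (exists y, Q y) -> exists y, Q y /\ forall z, Q z -> ~ lt z y.
Proof.
  intros [y Hy]. induction y as [y IH] using (well_founded_ind wf).
  destruct (classic (exists z, Q z /\ lt z y)) as [[z [Qz Hz]]|N].
  - exact (IH z Hz Qz).
  - exists y. split; auto. intros z Qz Hz. apply N. eauto.
Qed.

Section Three.
Variables (T1 : Type) (lt1 : T1 -> T1 -> Prop) (T2 : Type) (lt2 : T2 -> T2 -> Prop).
Hypothesis H1 : omega1_like lt1.
Hypothesis H2 : omega2_like T1 lt2.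
Notation irr1 := (M1.irr1 T1 lt1 H1).
Notation tr1 := (M1.tr1 T1 lt1 H1).
Notation tot1 := (M1.tot1 T1 lt1 H1).
Notation wf1 := (M1.wf1 T1 lt1 H1).
Notation inh1 := (M1.inh1 T1 lt1 H1).
Notation notctbl1 := (M1.notctbl1 T1 lt1 H1).
Notation ctbl_lt1 := (M1.ctbl_lt1 T1 lt1 H1).
Notation bound1 := (M1.bound1 T1 lt1 H1).
Notation succ1 := (M1.succ1 T1 lt1 H1).
Notation succ1_gt := (M1.succ1_gt T1 lt1 H1).
Notation le_succ1 := (M1.le_succ1 T1 lt1 H1).
Notation e1 := (M1.e1 T1 lt1).
Notation e1_inj := (M1.e1_inj T1 lt1 H1).
Notation Pn := (M1.Pn T1).
Notation Pn_inj := (M1.Pn_inj T1 lt1 H1).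
Notation code := (M1.code T1 lt1 H1).
Notation code_inj := (M1.code_inj T1 lt1 H1).
Notation irr2 := (M2.irr2 T1 T2 lt2 H2).
Notation tr2 := (M2.tr2 T1 T2 lt2 H2).
Notation tot2 := (M2.tot2 T1 T2 lt2 H2).
Notation wf2 := (M2.wf2 T1 T2 lt2 H2).
Notation inh2 := (M2.inh2 T1 lt1 T2 lt2 H1 H2).
Notation e2 := (M2.e2 T1 lt1 T2 lt2 H1).
Notation e2_inj := (M2.e2_inj T1 lt1 T2 lt2 H1 H2).
Notation bound2 := (M2.bound2 T1 lt1 T2 lt2 H1 H2).
Notation bound2T1 := (M2.bound2T1 T1 lt1 T2 lt2 H1 H2).
Notation io := (M2.io T1 lt1 T2 lt2 H1 H2).
Notation io_mono := (M2.io_mono T1 lt1 T2 lt2 H1 H2).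
Notation io_inj := (M2.io_inj T1 lt1 T2 lt2 H1 H2).
Notation gs := (M2.gs T1 lt1 T2 lt2 H1 H2).
Notation io_gs := (M2.io_gs T1 lt1 T2 lt2 H1 H2).
Notation unc := (M2.unc T1 lt1 T2 lt2 H1 H2).
Notation dec := (M2.dec T1 lt1 T2 lt2 H1 H2).
Notation dec_io := (M2.dec_io T1 lt1 T2 lt2 H1 H2).

Definition lim (a : T2) : Prop := (exists d, lt2 d a) /\ sup_is lt2 (fun _ => True) a.
Definition omseq (a : T2) (c : nat -> T2) : Prop :=
  (forall n, lt2 (c n) (c (S n))) /\ (forall n, lt2 (c n) a) /\ sup_is lt2 (fun b => exists n, c n = b) a.

Lemma sup_mono : forall (X Y : T2 -> Prop) a, (forall x, X x -> Y x) -> sup_is lt2 X a -> sup_is lt2 Y a.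
Proof. intros X Y a H S d Hd. destruct (S d Hd) as [b [Xb Hb]]. eauto. Qed.

Lemma omseq_lim : forall a c, omseq a c -> lim a.
Proof.
  intros a c [Hc1 [Hc2 Hc3]]. split; [exists (c 0); auto|]. apply sup_mono with (X := fun b => exists n, c n = b); auto.
Qed.

Lemma omseq_mono : forall a c, omseq a c -> forall n m, n < m -> lt2 (c n) (c m).
Proof. intros a c [Hc _]. apply incr_lt; auto. apply tr2. Qed.

Lemma omseq_not_cof : forall a c, omseq a c -> ~ cof_omega1 lt1 lt2 a.
Proof.
  intros a c Hc [h [Hh1 [Hh2 Hh3]]].
  destruct (choice (fun n xi => le2 lt2 (c n) (h xi))) as [xi Hxi].
  { intro n. apply Hh3. apply Hc. }
  destruct (bound1 (fun z => exists n, xi n = z)) as [z Hz].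
  { exists xi. intros x [n <-]. eauto. }
  destruct Hc as [_ [_ Hc3]]. destruct (Hc3 (h z) (Hh2 z)) as [b [[n <-] [L1 L2]]].
  assert (L3 : lt2 (h (xi n)) (h z)) by (apply Hh1; apply Hz; eauto).
  destruct (Hxi n) as [L4|L4].
  - apply (irr2 (c n)). eapply tr2; [exact L4|]. eapply tr2; eauto.
  - rewrite L4 in L1. apply (irr2 (h z)). eapply tr2; eauto.
Qed.

Lemma above_ex : forall a x y, lim a -> lt2 x a -> lt2 y a -> exists z, lt2 z a /\ lt2 x z /\ lt2 y z.
Proof.
  intros a x y [_ La] Hx Hy. destruct (tot2 x y) as [h|[h|h]].
  - destruct (La y Hy) as [z [_ [Hz1 Hz2]]]. exists z. repeat split; auto. eapply tr2; eauto.
  - subst. destruct (La y Hy) as [z [_ [Hz1 Hz2]]]. eauto.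
  - destruct (La x Hx) as [z [_ [Hz1 Hz2]]]. exists z. repeat split; auto. eapply tr2; eauto.
Qed.

Lemma ctbl_cofinal : forall a (Y : T2 -> Prop), lim a -> Ctbl Y -> (forall y, Y y -> lt2 y a) ->
  (forall t, lt2 t a -> exists y, Y y /\ ~ lt2 y t) -> exists c, omseq a c.
Proof.
  intros a Y La [u Hu] HY Hcof.
  destruct La as [[d0 Hd0] La'].
  pose (step := fun n x => epsilon inh2 (fun z => lt2 z a /\ lt2 x z /\ (lt2 (u n) a -> lt2 (u n) z))).
  pose (c := fix c n := match n with 0 => d0 | S n => step n (c n) end).
  assert (Hstep : forall n x, lt2 x a -> lt2 (step n x) a /\ lt2 x (step n x) /\ (lt2 (u n) a -> lt2 (u n) (step n x))).
  { intros n x Hx. unfold step. apply (epsilon_spec inh2 (fun z => lt2 z a /\ lt2 x z /\ (lt2 (u n) a -> lt2 (u n) z))).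
    destruct (classic (lt2 (u n) a)) as [Hun|Hun].
    - destruct (above_ex a x (u n)) as [z Hz]; [split; eauto | auto | auto |]. exists z. tauto.
    - destruct (La' x Hx) as [z [_ [Hz1 Hz2]]]. exists z. tauto. }
  assert (Hca : forall n, lt2 (c n) a) by (induction n; simpl; [exact Hd0 | apply Hstep; auto]).
  exists c. split; [intro n; apply (Hstep n (c n) (Hca n))|]. split; [exact Hca|].
  intros d Hd. destruct (Hcof d Hd) as [y [Yy Hy]]. destruct (Hu y Yy) as [n <-].
  exists (c (S n)). split; [eauto|]. split; [|apply Hca].
  pose proof (proj2 (proj2 (Hstep n (c n) (Hca n))) (HY _ Yy)) as L. simpl.
  destruct (tot2 d (u n)) as [h|[h|h]]; [eapply tr2; eauto | subst; auto | tauto].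
Qed.

Lemma dichotomy : forall a, lim a -> cof_omega1 lt1 lt2 a \/ exists c, omseq a c.
Proof.
  intros a La. destruct (classic (exists c, omseq a c)) as [E|NE]; [right; exact E|left].
  destruct inh2 as [y0].
  destruct (wf_rec lt1 wf1 y0 (fun f xi y => lt2 y a /\ (forall eta, lt1 eta xi -> lt2 (f eta) a -> lt2 (f eta) y) /\
       (forall d, lt2 d a -> (lt1 (e2 a d) xi \/ e2 a d = xi) -> lt2 d y))) as [h Hh].
  { intros f g x y Hfg [A1 [A2 A3]]. split; auto. split; auto. intros eta He. rewrite <- Hfg; auto. }
  assert (Hh' : forall xi, lt2 (h xi) a /\ (forall eta, lt1 eta xi -> lt2 (h eta) a -> lt2 (h eta) (h xi)) /\
       (forall d, lt2 d a -> (lt1 (e2 a d) xi \/ e2 a d = xi) -> lt2 d (h xi))).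
  { intro xi. apply Hh.
    set (Y := fun y => (exists eta, lt1 eta xi /\ y = h eta /\ lt2 (h eta) a) \/ (lt2 y a /\ (lt1 (e2 a y) xi \/ e2 a y = xi))).
    assert (CY : Ctbl Y).
    { apply ctbl_U2.
      - apply ctbl_sub with (A := fun y => exists eta, lt1 eta xi /\ y = h eta).
        + apply ctbl_image. apply ctbl_lt1.
        + intros y [eta [H3 [H4 _]]]. eauto.
      - apply inj_ctbl; [exact (inhabits y0)|]. exists (fun y => e1 (succ1 xi) (e2 a y)).
        intros x y [Hx Hx'] [Hy Hy'] E. apply e1_inj in E.
        + eapply e2_inj; eauto.
        + apply le_succ1. intro L. destruct Hx' as [Hx'|Hx']; [apply (irr1 xi); eapply tr1; eauto | subst; eapply irr1; eauto].
        + apply le_succ1. intro L. destruct Hy' as [Hy'|Hy']; [apply (irr1 xi); eapply tr1; eauto | subst; eapply irr1; eauto]. }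
    assert (YA : forall y, Y y -> lt2 y a) by (intros y [[eta [_ [-> L]]]|[L _]]; auto).
    destruct (classic (exists t, lt2 t a /\ forall y, Y y -> lt2 y t)) as [[t [Ht1 Ht2]]|Nt].
    - exists t. split; auto. split.
      + intros eta He Ha. apply Ht2. left. eauto.
      + intros d Hd Hd'. apply Ht2. right. auto.
    - exfalso. apply NE. apply (ctbl_cofinal a Y La CY YA).
      intros t Ht. apply NNPP. intro N. apply Nt. exists t. split; auto.
      intros y Yy. destruct (tot2 y t) as [k|[k|k]]; auto; exfalso; apply N; exists y; split; auto.
      + subst. apply irr2.
      + intro k'. apply (irr2 y). eapply tr2; eauto. }
  exists h. split; [|split].
  - intros x y Hxy. apply (proj1 (proj2 (Hh' y))); auto. apply Hh'.
  - intro x. apply Hh'.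
  - intros d Hd. exists (e2 a d). left. apply (proj2 (proj2 (Hh' (e2 a d)))); auto.
Qed.

Lemma club_omseq : forall D, club lt2 D -> forall x, exists a c, D a /\ lt2 x a /\ omseq a c /\ forall n, D (c n).
Proof.
  intros D [Dunb Dcl] x.
  pose (ab := fun z => epsilon inh2 (fun w => D w /\ lt2 z w)).
  assert (Hab : forall z, D (ab z) /\ lt2 z (ab z)) by (intro z; unfold ab; apply epsilon_spec; apply Dunb).
  pose (c := fun n => Nat.iter (S n) ab x).
  assert (Hc1 : forall n, lt2 (c n) (c (S n))) by (intro n; apply Hab).
  assert (HcD : forall n, D (c n)) by (intro n; apply Hab).
  destruct (bound2 (fun y => exists n, c n = y)) as [b Hb]; [exists c; eauto|].
  destruct (wf_least lt2 wf2 (fun y => forall n, lt2 (c n) y)) as [s [Hs1 Hs2]]; [exists b; eauto|].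
  assert (Hsup : sup_is lt2 (fun y => exists n, c n = y) s).
  { intros t Ht. assert (N : ~ forall n, lt2 (c n) t) by (intro K; exact (Hs2 t K Ht)).
    apply not_all_ex_not in N. destruct N as [n Hn]. exists (c (S n)). split; [eauto|]. split; [|apply Hs1].
    destruct (tot2 t (c n)) as [k|[k|k]]; [eapply tr2; eauto | subst; auto | tauto]. }
  exists s, c. split; [|split; [|split]]; auto.
  - apply Dcl; [exists (c 0); auto|]. apply sup_mono with (X := fun y => exists n, c n = y); auto. intros y [n <-]; auto.
  - eapply tr2; [apply (Hab x)| apply (Hs1 0)].
  - split; auto.
Qed.

Definition refine (D : T2 -> Prop) (g : T2) : T2 -> Prop := fun a => D a /\ lt2 g a /\ lim a.

Lemma refine_club : forall D g, club lt2 D -> club lt2 (refine D g).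
Proof.
  intros D g HD. split.
  - intro x. destruct (bound2 (fun y => y = x \/ y = g)) as [b Hb]; [apply ctbl_U2; apply ctbl_single|].
    destruct (club_omseq D HD b) as [a [c [Da [Ha [Hc _]]]]].
    exists a. split; [split; [auto|split]|].
    + eapply tr2; [apply Hb; auto | auto].
    + eapply omseq_lim; eauto.
    + eapply tr2; [apply Hb; auto | auto].
  - intros a [d Hd] Hs. split; [|split].
    + apply (proj2 HD); [eauto|]. apply sup_mono with (X := refine D g); auto. intros y [Dy _]; auto.
    + destruct (Hs d Hd) as [b [[_ [Hb _]] [_ Hba]]]. eapply tr2; eauto.
    + split; [eauto|]. apply sup_mono with (X := refine D g); auto.
Qed.

Lemma notS21_stationary : forall C, club lt2 C -> exists x, ~ S21 lt1 lt2 x /\ C x.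
Proof.
  intros C HC. destruct inh2 as [y0]. destruct (club_omseq C HC y0) as [a [c [Ca [_ [Hc _]]]]].
  exists a. split; auto. intro K. eapply omseq_not_cof; eauto.
Qed.

Lemma omseq_shift : forall a c g, omseq a c -> lt2 g a -> exists c', omseq a c' /\ forall n, lt2 g (c' n).
Proof.
  intros a c g Hc Hg. destruct Hc as [Hc1 [Hc2 Hc3]].
  destruct (Hc3 g Hg) as [b [[N <-] [L _]]].
  assert (Hm : forall n m, n < m -> lt2 (c n) (c m)) by (apply incr_lt; auto; apply tr2).
  assert (Hle : forall n m, n <= m -> c n = c m \/ lt2 (c n) (c m)).
  { intros n m H. destruct (Nat.eq_dec n m) as [->|]; auto. right. apply Hm. lia. }
  exists (fun n => c (n + N)). split; [split; [|split]|].
  - intro n. apply Hc1.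
  - intro n. apply Hc2.
  - intros d Hd. destruct (Hc3 d Hd) as [b [[m <-] [L1 L2]]]. exists (c (m + N)). split; [eauto|].
    split; [|apply Hc2]. destruct (Hle m (m + N)) as [E|E]; [lia| rewrite <- E; auto | eapply tr2; eauto].
  - intro n. destruct (Hle N (n + N)) as [E|E]; [lia | rewrite <- E; auto | eapply tr2; eauto].
Qed.

End Three.

End M3.
Import M3.

Module M4.

Section Four.
Variables (T1 : Type) (lt1 : T1 -> T1 -> Prop) (T2 : Type) (lt2 : T2 -> T2 -> Prop).
Hypothesis H1 : omega1_like lt1.
Hypothesis H2 : omega2_like T1 lt2.
Notation irr1 := (M1.irr1 T1 lt1 H1).
Notation tr1 := (M1.tr1 T1 lt1 H1).
Notation tot1 := (M1.tot1 T1 lt1 H1).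
Notation wf1 := (M1.wf1 T1 lt1 H1).
Notation inh1 := (M1.inh1 T1 lt1 H1).
Notation notctbl1 := (M1.notctbl1 T1 lt1 H1).
Notation ctbl_lt1 := (M1.ctbl_lt1 T1 lt1 H1).
Notation bound1 := (M1.bound1 T1 lt1 H1).
Notation succ1 := (M1.succ1 T1 lt1 H1).
Notation succ1_gt := (M1.succ1_gt T1 lt1 H1).
Notation le_succ1 := (M1.le_succ1 T1 lt1 H1).
Notation e1 := (M1.e1 T1 lt1).
Notation e1_inj := (M1.e1_inj T1 lt1 H1).
Notation Pn := (M1.Pn T1).
Notation Pn_inj := (M1.Pn_inj T1 lt1 H1).
Notation code := (M1.code T1 lt1 H1).
Notation code_inj := (M1.code_inj T1 lt1 H1).
Notation irr2 := (M2.irr2 T1 T2 lt2 H2).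
Notation tr2 := (M2.tr2 T1 T2 lt2 H2).
Notation tot2 := (M2.tot2 T1 T2 lt2 H2).
Notation wf2 := (M2.wf2 T1 T2 lt2 H2).
Notation inh2 := (M2.inh2 T1 lt1 T2 lt2 H1 H2).
Notation e2 := (M2.e2 T1 lt1 T2 lt2 H1).
Notation e2_inj := (M2.e2_inj T1 lt1 T2 lt2 H1 H2).
Notation bound2 := (M2.bound2 T1 lt1 T2 lt2 H1 H2).
Notation bound2T1 := (M2.bound2T1 T1 lt1 T2 lt2 H1 H2).
Notation io := (M2.io T1 lt1 T2 lt2 H1 H2).
Notation io_mono := (M2.io_mono T1 lt1 T2 lt2 H1 H2).
Notation io_inj := (M2.io_inj T1 lt1 T2 lt2 H1 H2).
Notation gs := (M2.gs T1 lt1 T2 lt2 H1 H2).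
Notation io_gs := (M2.io_gs T1 lt1 T2 lt2 H1 H2).
Notation unc := (M2.unc T1 lt1 T2 lt2 H1 H2).
Notation dec := (M2.dec T1 lt1 T2 lt2 H1 H2).
Notation dec_io := (M2.dec_io T1 lt1 T2 lt2 H1 H2).
Notation lim := (M3.lim T2 lt2).
Notation omseq := (M3.omseq T2 lt2).
Notation refine := (M3.refine T2 lt2).
Notation sup_mono := (M3.sup_mono T2 lt2).
Notation omseq_mono := (M3.omseq_mono T1 T2 lt2 H2).
Notation omseq_not_cof := (M3.omseq_not_cof T1 lt1 T2 lt2 H1 H2).
Notation above_ex := (M3.above_ex T1 T2 lt2 H2).
Notation dichotomy := (M3.dichotomy T1 lt1 T2 lt2 H1 H2).
Notation club_omseq := (M3.club_omseq T1 lt1 T2 lt2 H1 H2).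
Notation refine_club := (M3.refine_club T1 lt1 T2 lt2 H1 H2).
Notation notS21_stationary := (M3.notS21_stationary T1 lt1 T2 lt2 H1 H2).
Notation omseq_shift := (M3.omseq_shift T1 T2 lt2 H2).

Lemma h_inj : forall (h : T1 -> T2), (forall x y, lt1 x y -> lt2 (h x) (h y)) ->
  forall x y, h x = h y -> x = y.
Proof.
  intros h Hh x y E. destruct (tot1 x y) as [k|[k|k]]; auto; apply Hh in k; rewrite E in k; now apply irr2 in k.
Qed.

Lemma Zref : forall (F : T2 -> T2 -> list T2) a, lt2 gs a -> cof_omega1 lt1 lt2 a ->
  exists (f : T2 -> T2) (B : T2 -> Prop),
    (forall b, lt2 b a -> (exists g, lt2 g b) -> lt2 (f b) b) /\
    (forall b, B b -> lt2 b a) /\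
    (forall d, lt2 d a -> exists b, B b /\ le2 lt2 d b) /\
    forall i, lt2 i a -> ~ sup_is lt2 (fun b => B b /\ In (f b) (F i b)) a.
Proof.
  intros F a Hga [h [Hh1 [Hh2 Hh3]]].
  destruct inh2 as [t0].
  destruct (choice (fun b y => ((exists g, lt2 g b) -> lt2 y b) /\
      forall xi i, h xi = b -> lt2 gs b -> lt2 i a -> lt1 (e2 a i) xi -> ~ In y (F i b))) as [f Hf].
  { intro b. destruct (classic (exists xi, h xi = b /\ lt2 gs b)) as [[xi0 [E0 G0]]|N].
    - set (U := fun y => exists i, (lt2 i a /\ lt1 (e2 a i) xi0) /\ In y (F i b)).
      assert (CU : Ctbl U).
      { apply ctbl_UnionI; [exact t0| |intros i _; apply (ctbl_list t0)].
        apply inj_ctbl; [exact (inhabits t0)|]. exists (fun i => e1 xi0 (e2 a i)).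
        intros x y [Hx Hx'] [Hy Hy'] E. apply e1_inj in E; auto. eapply e2_inj; eauto. }
      assert (Hnb : ~ lt2 b gs) by (intro K; apply (irr2 b); eapply tr2; eauto).
      destruct (classic (exists y, lt2 y b /\ ~ U y)) as [[y [Hy1 Hy2]]|N2].
      + exists y. split; [auto|]. intros xi i Exi _ Hi Hxi Hin. apply Hy2.
        assert (xi = xi0) by (apply (h_inj h Hh1); congruence). subst xi.
        exists i. auto.
      + exfalso. apply (unc b Hnb). apply ctbl_sub with (A := U); auto.
        intros y Hy. apply NNPP. intro K. apply N2. eauto.
    - destruct (classic (exists g, lt2 g b)) as [[g Hg]|Ng].
      + exists g. split; [auto|]. intros xi i Exi Hgb. exfalso. apply N. eauto.
      + exists t0. split; [intro K; contradiction|]. intros xi i Exi Hgb. exfalso. apply N. eauto. }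
  exists f, (fun b => exists xi, h xi = b /\ lt2 gs b).
  split; [|split; [|split]].
  - intros b _ Hg. apply (proj1 (Hf b) Hg).
  - intros b [xi [<- _]]. apply Hh2.
  - intros d Hd. destruct (Hh3 d Hd) as [x1 Hx1]. destruct (Hh3 gs Hga) as [x2 Hx2].
    destruct (bound1 (fun x => x = x1 \/ x = x2)) as [z Hz]; [apply ctbl_U2; apply ctbl_single|].
    exists (h z). split.
    + exists z. split; auto. destruct Hx2 as [L|L]; [eapply tr2; [exact L| apply Hh1; apply Hz; auto] | rewrite L; apply Hh1; apply Hz; auto].
    + left. destruct Hx1 as [L|L]; [eapply tr2; [exact L| apply Hh1; apply Hz; auto] | rewrite L; apply Hh1; apply Hz; auto].
  - intros i Hi Hs. set (xi' := succ1 (e2 a i)).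
    destruct (Hs (h xi') (Hh2 xi')) as [b [[[xi [<- Gb]] Hin] [Lb _]]].
    assert (Lx : lt1 xi' xi).
    { destruct (tot1 xi' xi) as [k|[k|k]]; auto; exfalso.
      - subst. now apply irr2 in Lb.
      - apply Hh1 in k. apply (irr2 (h xi)). eapply tr2; eauto. }
    apply (proj2 (Hf (h xi)) xi i eq_refl Gb Hi); auto.
    eapply tr1; [apply succ1_gt | exact Lx].
Qed.

Lemma J_sub : forall S, J_omega lt2 S -> nonstationary lt2 (fun a => S a /\ S21 lt1 lt2 a).
Proof.
  intros S [C [F [HC HJ]]] Hst.
  destruct (Hst (refine C gs) (refine_club C gs HC)) as [a [[Sa S21a] [Ca [Ga La]]]].
  destruct (Zref F a Ga S21a) as [f [B [Hf [HB1 [HB2 HB3]]]]].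
  destruct (HJ a Sa Ca f Hf B HB1 HB2) as [i [Hi Hs]].
  exact (HB3 i Hi Hs).
Qed.

Lemma NS_J : forall S, nonstationary lt2 S -> J_omega lt2 S.
Proof.
  intros S HS. unfold nonstationary, stationary in HS.
  apply not_all_ex_not in HS. destruct HS as [C HC].
  apply imply_to_and in HC. destruct HC as [HC N].
  exists C, (fun _ _ => []). split; auto. intros a Sa Ca. exfalso. apply N. eauto.
Qed.

Lemma Nref : (forall G : T1 -> nat -> nat, exists g, forall xi, le_star (G xi) g) ->
  forall (F : T2 -> T2 -> list T2) a c, omseq a c -> (forall n, lt2 gs (c n)) ->
  exists f : T2 -> T2,
    (forall b, lt2 b a -> (exists g, lt2 g b) -> lt2 (f b) b) /\
    forall i, lt2 i a -> ~ sup_is lt2 (fun b => (exists n, c n = b) /\ In (f b) (F i b)) a.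
Proof.
  intros Hb F a c Hc Hgc. destruct inh1 as [x0]. destruct inh2 as [t0].
  pose (z := fun k => io (Pn x0 k)).
  assert (zinj : forall k m, z k = z m -> k = m).
  { intros k m E. apply io_inj in E. apply Pn_inj in E. tauto. }
  assert (zlt : forall k, lt2 (z k) gs) by (intro k; apply io_gs).
  pose (idx := fun y => epsilon (inhabits 0) (fun k => z k = y)).
  assert (idxz : forall k, idx (z k) = k).
  { intro k. apply zinj. unfold idx. apply (epsilon_spec (inhabits 0) (fun m => z m = z k)). eauto. }
  pose (hh := fun i n => listmax (map idx (F i (c n)))).
  pose (G := fun xi => hh (epsilon inh2 (fun i => lt2 i a /\ e2 a i = xi))).
  destruct (Hb G) as [g Hg].
  assert (cinj : forall n m, c n = c m -> n = m) by (apply incr_inj with lt2; [apply irr2 | apply tr2 | apply Hc]).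
  destruct (choice (fun b y => ((exists g', lt2 g' b) -> lt2 y b) /\ forall n, c n = b -> y = z (S (g n)))) as [f Hf].
  { intro b. destruct (classic (exists n, c n = b)) as [[n <-]|N].
    - exists (z (S (g n))). split.
      + intros _. eapply tr2; [apply zlt | apply Hgc].
      + intros m Em. apply cinj in Em. subst. reflexivity.
    - destruct (classic (exists g', lt2 g' b)) as [[g' Hg']|Ng].
      + exists g'. split; auto. intros n En. exfalso. apply N. eauto.
      + exists t0. split; [intro K; contradiction|]. intros n En. exfalso. apply N. eauto. }
  exists f. split; [intros b _ Hg'; apply (proj1 (Hf b) Hg')|].
  intros i Hi Hs.
  assert (EG : G (e2 a i) = hh i).
  { unfold G. f_equal. pose proof (epsilon_spec inh2 (fun i' => lt2 i' a /\ e2 a i' = e2 a i) (ex_intro _ i (conj Hi eq_refl))) as [K1 K2].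
    eapply e2_inj; eauto. }
  destruct (Hg (e2 a i)) as [N0 HN0]. rewrite EG in HN0.
  destruct (Hs (c N0) (proj1 (proj2 Hc) N0)) as [b [[[n <-] Hin] [Lb _]]].
  assert (Hn : N0 < n).
  { destruct (le_lt_dec n N0) as [k|k]; auto. exfalso.
    destruct (Nat.eq_dec n N0) as [->|ne]; [now apply irr2 in Lb|].
    apply (irr2 (c n)). apply (tr2 _ (c N0)); [apply (omseq_mono a c Hc); lia | exact Lb]. }
  rewrite (proj2 (Hf (c n)) n eq_refl) in Hin.
  assert (L : idx (z (S (g n))) <= hh i n).
  { unfold hh. apply listmax_In. apply in_map. exact Hin. }
  rewrite idxz in L. specialize (HN0 n). lia.
Qed.

Lemma J_NS_bounded : (forall G : T1 -> nat -> nat, exists g, forall xi, le_star (G xi) g) ->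
  forall S, J_omega lt2 S -> nonstationary lt2 S.
Proof.
  intros Hb S [C [F [HC HJ]]] Hst.
  destruct (Hst (refine C gs) (refine_club C gs HC)) as [a [Sa [Ca [Ga La]]]].
  destruct (dichotomy a La) as [Ha|[c Hc]].
  - destruct (Zref F a Ga Ha) as [f [B [Hf [HB1 [HB2 HB3]]]]].
    destruct (HJ a Sa Ca f Hf B HB1 HB2) as [i [Hi Hs]].
    exact (HB3 i Hi Hs).
  - destruct (omseq_shift a c gs Hc Ga) as [c' [Hc' Hgc']].
    destruct (Nref Hb F a c' Hc' Hgc') as [f [Hf Hr]].
    destruct (HJ a Sa Ca f Hf (fun b => exists n, c' n = b)) as [i [Hi Hs]].
    + intros b [n <-]. apply Hc'.
    + intros d Hd. destruct (proj2 (proj2 Hc') d Hd) as [b [Bb [L _]]]. exists b. split; auto. left; auto.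
    + exact (Hr i Hi Hs).
Qed.

End Four.

End M4.
Import M4.

Module M5.

Lemma in_seq_le : forall i x, i <= x -> In i (seq 0 (S x)).
Proof. intros i x H. apply in_seq. lia. Qed.

Lemma not_inf : forall P : nat -> Prop, ~ infinite_nat P -> exists n, forall k, n <= k -> ~ P k.
Proof.
  intros P N. unfold infinite_nat in N. apply not_all_ex_not in N. destruct N as [n Hn].
  exists n. intros k Hk Pk. apply Hn. eauto.
Qed.

Lemma no_nat_mfam : ~ exists H : nat -> nat -> list nat, m_family H.
Proof.
  intros [H HH].
  pose (g := fun x => S (listmax (map (fun i => listmax (H i x)) (seq 0 (S x))))).
  destruct (HH (fun _ => True) g) as [i Hi]; [intro n; exists n; auto|].
  destruct (Hi i) as [x [Hx [_ Hin]]].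
  apply listmax_In in Hin.
  assert (L : listmax (H i x) <= listmax (map (fun i => listmax (H i x)) (seq 0 (S x)))).
  { apply listmax_In. apply in_map_iff. exists i. split; auto. apply in_seq_le; auto. }
  unfold g in Hin. lia.
Qed.

Lemma no_nat_unb : ~ exists F : nat -> nat -> nat, unbounded_family F.
Proof.
  intros [F HF]. apply HF.
  exists (fun x => listmax (map (fun i => F i x) (seq 0 (S x)))).
  intro i. exists i. intros k Hk. apply listmax_In. apply in_map_iff. exists i. split; auto. apply in_seq_le; auto.
Qed.

Lemma mfam_unb {I} (H : I -> nat -> list nat) : m_family H -> unbounded_family (fun i x => listmax (H i x)).
Proof.
  intros HH [g Hg].
  destruct (HH (fun _ => True) (fun x => S (g x))) as [i Hi]; [intro n; exists n; auto|].
  destruct (Hg i) as [N HN]. destruct (Hi N) as [k [Hk [_ Hin]]].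
  apply listmax_In in Hin. specialize (HN k Hk). simpl in HN. lia.
Qed.

Lemma unb_mfam {I} (F : I -> nat -> nat) : unbounded_family F -> exists H : I -> nat -> list nat, m_family H.
Proof.
  intros HF.
  pose (M := fun i x => listmax (map (F i) (seq 0 (S x)))).
  exists (fun i x => seq 0 (S (M i x))).
  intros X g HX. apply NNPP. intro N. apply HF.
  assert (N' : forall i, exists n, forall k, n <= k -> ~ (X k /\ In (g k) (seq 0 (S (M i k))))).
  { intro i. apply not_inf. intro K. apply N. exists i. exact K. }
  pose (nx := fun n => epsilon (inhabits 0) (fun k => n <= k /\ X k)).
  assert (Hnx : forall n, n <= nx n /\ X (nx n)) by (intro n; apply (epsilon_spec (inhabits 0) (fun k => n <= k /\ X k)); apply HX).
  exists (fun n => listmax (map g (seq 0 (S (nx n))))).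
  intro i. destruct (N' i) as [Ni HNi]. exists Ni. intros n Hn.
  destruct (Hnx n) as [Hn1 Hn2].
  assert (Hg : ~ In (g (nx n)) (seq 0 (S (M i (nx n))))) by (intro K; apply (HNi (nx n)); [lia | auto]).
  assert (L1 : M i (nx n) < g (nx n)).
  { destruct (le_lt_dec (g (nx n)) (M i (nx n))) as [k|k]; auto. exfalso. apply Hg. apply in_seq. lia. }
  assert (L2 : F i n <= M i (nx n)) by (apply listmax_In; apply in_map; apply in_seq_le; auto).
  assert (L3 : g (nx n) <= listmax (map g (seq 0 (S (nx n))))) by (apply listmax_In; apply in_map; apply in_seq_le; auto).
  lia.
Qed.

End M5.
Import M5.

Module M6.

Section Six.
Variables (T1 : Type) (lt1 : T1 -> T1 -> Prop) (T2 : Type) (lt2 : T2 -> T2 -> Prop).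
Hypothesis H1 : omega1_like lt1.
Hypothesis H2 : omega2_like T1 lt2.
Notation irr1 := (M1.irr1 T1 lt1 H1).
Notation tr1 := (M1.tr1 T1 lt1 H1).
Notation tot1 := (M1.tot1 T1 lt1 H1).
Notation wf1 := (M1.wf1 T1 lt1 H1).
Notation inh1 := (M1.inh1 T1 lt1 H1).
Notation notctbl1 := (M1.notctbl1 T1 lt1 H1).
Notation ctbl_lt1 := (M1.ctbl_lt1 T1 lt1 H1).
Notation bound1 := (M1.bound1 T1 lt1 H1).
Notation succ1 := (M1.succ1 T1 lt1 H1).
Notation succ1_gt := (M1.succ1_gt T1 lt1 H1).
Notation le_succ1 := (M1.le_succ1 T1 lt1 H1).
Notation e1 := (M1.e1 T1 lt1).
Notation e1_inj := (M1.e1_inj T1 lt1 H1).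
Notation Pn := (M1.Pn T1).
Notation Pn_inj := (M1.Pn_inj T1 lt1 H1).
Notation code := (M1.code T1 lt1 H1).
Notation code_inj := (M1.code_inj T1 lt1 H1).
Notation irr2 := (M2.irr2 T1 T2 lt2 H2).
Notation tr2 := (M2.tr2 T1 T2 lt2 H2).
Notation tot2 := (M2.tot2 T1 T2 lt2 H2).
Notation wf2 := (M2.wf2 T1 T2 lt2 H2).
Notation inh2 := (M2.inh2 T1 lt1 T2 lt2 H1 H2).
Notation e2 := (M2.e2 T1 lt1 T2 lt2 H1).
Notation e2_inj := (M2.e2_inj T1 lt1 T2 lt2 H1 H2).
Notation bound2 := (M2.bound2 T1 lt1 T2 lt2 H1 H2).
Notation bound2T1 := (M2.bound2T1 T1 lt1 T2 lt2 H1 H2).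
Notation io := (M2.io T1 lt1 T2 lt2 H1 H2).
Notation io_mono := (M2.io_mono T1 lt1 T2 lt2 H1 H2).
Notation io_inj := (M2.io_inj T1 lt1 T2 lt2 H1 H2).
Notation gs := (M2.gs T1 lt1 T2 lt2 H1 H2).
Notation io_gs := (M2.io_gs T1 lt1 T2 lt2 H1 H2).
Notation unc := (M2.unc T1 lt1 T2 lt2 H1 H2).
Notation dec := (M2.dec T1 lt1 T2 lt2 H1 H2).
Notation dec_io := (M2.dec_io T1 lt1 T2 lt2 H1 H2).
Notation lim := (M3.lim T2 lt2).
Notation omseq := (M3.omseq T2 lt2).
Notation refine := (M3.refine T2 lt2).
Notation sup_mono := (M3.sup_mono T2 lt2).
Notation omseq_mono := (M3.omseq_mono T1 T2 lt2 H2).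
Notation omseq_not_cof := (M3.omseq_not_cof T1 lt1 T2 lt2 H1 H2).
Notation above_ex := (M3.above_ex T1 T2 lt2 H2).
Notation dichotomy := (M3.dichotomy T1 lt1 T2 lt2 H1 H2).
Notation club_omseq := (M3.club_omseq T1 lt1 T2 lt2 H1 H2).
Notation refine_club := (M3.refine_club T1 lt1 T2 lt2 H1 H2).
Notation notS21_stationary := (M3.notS21_stationary T1 lt1 T2 lt2 H1 H2).
Notation omseq_shift := (M3.omseq_shift T1 T2 lt2 H2).

Lemma evdiff : exists s : T2 -> T1 -> T1,
  forall g b xi, lt2 g b -> lt1 (e2 b g) xi -> s b xi <> s g xi.
Proof.
  destruct (wf_rec lt2 wf2 (fun x : T1 => x)
    (fun s b v => forall xi g, lt2 g b -> lt1 (e2 b g) xi -> v xi <> s g xi)) as [s Hs].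
  { intros f g x a Hfg H xi y Hy Hxy. rewrite <- Hfg; auto. }
  exists s. intros g b xi Hg Hxi. apply Hs; auto.
  destruct (choice (fun xi v => forall g, lt2 g b -> lt1 (e2 b g) xi -> v <> s g xi)) as [v Hv]; [|eauto].
  intro xi'. apply NNPP. intro N. apply notctbl1.
  apply ctbl_sub with (A := fun y => exists g, (lt2 g b /\ lt1 (e2 b g) xi') /\ y = s g xi').
  - apply ctbl_image. destruct inh2 as [t0]. apply inj_ctbl; [exact (inhabits t0)|].
    exists (fun g => e1 xi' (e2 b g)). intros x y [Hx Hx'] [Hy Hy'] E. apply e1_inj in E; auto. eapply e2_inj; eauto.
  - intros y _. apply NNPP. intro K. apply N. exists y. intros g' Hg' Hx' E. apply K. exists g'. auto.
Qed.

Definition code3 (p q r : T1) : T1 := code p (code q r).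
Lemma code3_inj : forall p q r p' q' r', code3 p q r = code3 p' q' r' -> p = p' /\ q = q' /\ r = r'.
Proof.
  intros. unfold code3 in H. apply code_inj in H. destruct H as [E1 E2]. apply code_inj in E2. tauto.
Qed.

Lemma Mpos : forall H : T1 -> nat -> list nat, m_family H ->
  exists F : T2 -> T2 -> list T2, forall a, lt2 gs a -> (exists c, omseq a c) ->
    forall (f : T2 -> T2), (forall b, lt2 b a -> (exists g, lt2 g b) -> lt2 (f b) b) ->
    forall (B : T2 -> Prop), (forall b, B b -> lt2 b a) -> (forall d, lt2 d a -> exists b, B b /\ le2 lt2 d b) ->
    exists i, lt2 i a /\ sup_is lt2 (fun b => B b /\ In (f b) (F i b)) a.
Proof.
  intros H HH. destruct evdiff as [s Hs]. destruct inh1 as [x0]. destruct inh2 as [t0].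
  pose (dec3 := fun xi => epsilon (inhabits (x0, x0, x0)) (fun t => code3 (fst (fst t)) (snd (fst t)) (snd t) = xi)).
  assert (Hdec3 : forall p q r, dec3 (code3 p q r) = (p, q, r)).
  { intros p q r. unfold dec3.
    pose proof (epsilon_spec (inhabits (x0, x0, x0)) (fun t => code3 (fst (fst t)) (snd (fst t)) (snd t) = code3 p q r)
      (ex_intro _ (p, q, r) eq_refl)) as E. simpl in E.
    destruct (epsilon _ _) as [[p' q'] r']. simpl in E. apply code3_inj in E. destruct E as [-> [-> ->]]. reflexivity. }
  pose (selP := fun b dl k y => lt2 y b /\ lt1 (e2 b y) dl /\ e1 dl (e2 b y) = k).
  pose (sel := fun b dl k => match excluded_middle_informative (exists y, selP b dl k y) with
                | left _ => [epsilon inh2 (selP b dl k)] | right _ => [] end).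
  exists (fun i b => let t := dec3 (dec i) in
            flat_map (sel b (snd (fst t))) (H (snd t) (e1 (snd (fst t)) (s b (fst (fst t)))))).
  intros a Hga [c Hc] f Hreg B HB Hcof.
  assert (La : lim a) by (eapply M3.omseq_lim; eauto).
  destruct (proj2 La gs Hga) as [tt [_ [Htt1 Htt2]]].
  destruct (Hcof tt Htt2) as [b0 [Bb0 Lb0]].
  assert (Gb0 : lt2 gs b0) by (destruct Lb0 as [L|L]; [eapply tr2; eauto | subst; auto]).
  pose (step := fun n x => epsilon inh2 (fun b => B b /\ lt2 x b /\ lt2 (c n) b)).
  assert (Hstep : forall n x, lt2 x a -> B (step n x) /\ lt2 x (step n x) /\ lt2 (c n) (step n x)).
  { intros n x Hx. unfold step. apply (epsilon_spec inh2 (fun b => B b /\ lt2 x b /\ lt2 (c n) b)).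
    destruct (above_ex a x (c n) La Hx (proj1 (proj2 Hc) n)) as [t [Ht1 [Ht2 Ht3]]].
    destruct (Hcof t Ht1) as [b [Bb Lb]]. exists b.
    destruct Lb as [L|L]; [split; auto; split; eapply tr2; eauto | subst; auto]. }
  pose (bl := fix bl n := match n with 0 => b0 | S n => step n (bl n) end).
  assert (HblB : forall n, B (bl n)) by (induction n; simpl; [exact Bb0 | apply (Hstep n (bl n) (HB _ IHn))]).
  assert (Hbla : forall n, lt2 (bl n) a) by (intro n; apply HB; apply HblB).
  assert (Hbl1 : forall n, lt2 (bl n) (bl (S n))) by (intro n; apply (Hstep n (bl n) (Hbla n))).
  assert (Hblc : forall n, lt2 (c n) (bl (S n))) by (intro n; apply (Hstep n (bl n) (Hbla n))).
  assert (blmono : forall n m, n < m -> lt2 (bl n) (bl m)) by (apply incr_lt; [apply tr2 | exact Hbl1]).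
  assert (blinj : forall n m, bl n = bl m -> n = m) by (apply incr_inj with lt2; [apply irr2 | apply tr2 | exact Hbl1]).
  assert (Hgsb : forall n, lt2 gs (bl n)).
  { intros [|n]; [exact Gb0|]. eapply tr2; [exact Gb0 | exact (blmono 0 (S n) ltac:(lia))]. }
  assert (blcof : forall d, lt2 d a -> exists n, lt2 d (bl n)).
  { intros d Hd. destruct (proj2 (proj2 Hc) d Hd) as [b [[m <-] [L _]]]. exists (S m). eapply tr2; eauto. }
  destruct (bound1 (fun z => exists k, (fun k => let p := of_nat k in e2 (bl (snd p)) (bl (fst p))) k = z)) as [i0 Hi0].
  { exists (fun k => let p := of_nat k in e2 (bl (snd p)) (bl (fst p))). intros x [k <-]. eauto. }
  assert (Hi0' : forall n m, lt1 (e2 (bl m) (bl n)) i0).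
  { intros n m. apply Hi0. exists (to_nat (n, m)). cbv beta zeta. rewrite (cancel_of_to (n, m)). reflexivity. }
  pose (x := fun n => s (bl n) i0).
  assert (xinj : forall n m, x n = x m -> n = m).
  { intros n m E. destruct (lt_eq_lt_dec n m) as [[k|k]|k]; auto; exfalso.
    - apply (Hs (bl n) (bl m) i0); [apply blmono; auto | apply Hi0' | symmetry; exact E].
    - apply (Hs (bl m) (bl n) i0); [apply blmono; auto | apply Hi0' | exact E]. }
  pose (rho := fun n => e2 (bl n) (f (bl n))).
  destruct (bound1 (fun z => (exists n, x n = z) \/ (exists n, rho n = z))) as [dl Hdl].
  { apply ctbl_U2; [exists x | exists rho]; intros z [n <-]; eauto. }
  pose (q := fun n => e1 dl (x n)).
  assert (qinj : forall n m, q n = q m -> n = m).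
  { intros n m E. apply xinj. apply e1_inj in E; auto; apply Hdl; left; eauto. }
  pose (X := fun k => exists n, k = q n).
  pose (g := fun k => e1 dl (rho (epsilon (inhabits 0) (fun n => k = q n)))).
  assert (Hgq : forall n, g (q n) = e1 dl (rho n)).
  { intro n. unfold g. f_equal. f_equal. apply qinj. symmetry.
    apply (epsilon_spec (inhabits 0) (fun m => q n = q m)). eauto. }
  destruct (HH X g) as [ze Hze].
  { intro N. destruct (inj_unbounded q qinj N) as [n Hn]. exists (q n). split; auto. exists n; auto. }
  exists (io (code3 i0 dl ze)). split.
  { eapply tr2; [apply io_gs | exact Hga]. }
  intros d Hd. destruct (blcof d Hd) as [n0 Hn0].
  destruct (Hze (S (listmax (map q (seq 0 n0))))) as [k [Hk [[n ->] Hin]]].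
  assert (Hn : n0 <= n).
  { destruct (le_lt_dec n0 n) as [h|h]; auto. exfalso.
    assert (L : q n <= listmax (map q (seq 0 n0))) by (apply listmax_In; apply in_map; apply in_seq; lia). lia. }
  exists (bl n). split; [split; [apply HblB|]|split; [|apply Hbla]].
  - cbv zeta. rewrite dec_io, Hdec3. simpl.
    apply in_flat_map. exists (g (q n)). split; [exact Hin|].
    rewrite Hgq. unfold sel.
    assert (Hy : selP (bl n) dl (e1 dl (rho n)) (f (bl n))).
    { unfold selP. refine (conj _ (conj _ eq_refl)).
      - apply Hreg; [apply Hbla | exists gs; apply Hgsb].
      - apply Hdl. right. exists n. reflexivity. }
    destruct (excluded_middle_informative (exists y, selP (bl n) dl (e1 dl (rho n)) y)) as [E|E]; [|exfalso; eauto].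
    left. pose proof (epsilon_spec inh2 _ E) as [Y1 [Y2 Y3]]. destruct Hy as [Z1 [Z2 Z3]].
    rewrite <- Z3 in Y3. apply e1_inj in Y3; auto. eapply e2_inj; eauto.
  - destruct (Nat.eq_dec n0 n) as [->|ne]; auto. eapply tr2; [exact Hn0 | apply blmono; lia].
Qed.

Lemma J_sup : forall H : T1 -> nat -> list nat, m_family H ->
  forall S, nonstationary lt2 (fun a => S a /\ S21 lt1 lt2 a) -> J_omega lt2 S.
Proof.
  intros H HH S HS. unfold nonstationary, stationary in HS.
  apply not_all_ex_not in HS. destruct HS as [D HD]. apply imply_to_and in HD. destruct HD as [HD N].
  destruct (Mpos H HH) as [F HF].
  exists (refine D gs), F. split; [apply refine_club; auto|].
  intros a Sa [Da [Ga La]] f Hf B HB1 HB2.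
  destruct (dichotomy a La) as [K|K].
  - exfalso. apply N. exists a. repeat split; auto.
  - eapply HF; eauto.
Qed.

End Six.

End M6.
Import M6.


Theorem corollary5p3 (T1 : Type) (lt1 : T1 -> T1 -> Prop)
    (T2 : Type) (lt2 : T2 -> T2 -> Prop) :
  omega1_like lt1 -> omega2_like T1 lt2 ->
  let P1 := forall S : T2 -> Prop,
      J_omega lt2 S <-> nonstationary lt2 (fun a => S a /\ S21 lt1 lt2 a) in
  let P2 := ~ (forall S : T2 -> Prop, J_omega lt2 S <-> nonstationary lt2 S) in
  let P3 := m_omega_eq_aleph1 T1 in
  let P4 := b_eq_aleph1 T1 in
  (P1 <-> P2) /\ (P1 <-> P3) /\ (P1 <-> P4).
Proof.
  intros H1 H2. cbv zeta.
  assert (A : b_eq_aleph1 T1 -> forall S : T2 -> Prop,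
      J_omega lt2 S <-> nonstationary lt2 (fun a => S a /\ S21 lt1 lt2 a)).
  { intros [[F HF] _]. destruct (unb_mfam F HF) as [H HH]. intro S. split.
    - apply (J_sub T1 lt1 T2 lt2 H1 H2).
    - apply (J_sup T1 lt1 T2 lt2 H1 H2 H HH). }
  assert (B : (forall S : T2 -> Prop,
      J_omega lt2 S <-> nonstationary lt2 (fun a => S a /\ S21 lt1 lt2 a)) ->
      ~ (forall S : T2 -> Prop, J_omega lt2 S <-> nonstationary lt2 S)).
  { intros P1 K.
    assert (NS1 : nonstationary lt2 (fun a => (~ S21 lt1 lt2 a) /\ S21 lt1 lt2 a)).
    { intro st. destruct (st (fun _ => True)) as [x [[k1 k2] _]]; [|contradiction].
      split; [intro x; destruct (nomax2 T1 lt1 T2 lt2 H1 H2 x) as [y Hy]; eauto | auto]. }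
    apply (proj1 (K _) (proj2 (P1 _) NS1)).
    intros C HC. destruct (notS21_stationary T1 lt1 T2 lt2 H1 H2 C HC) as [x Hx]. eauto. }
  assert (C : ~ (forall S : T2 -> Prop, J_omega lt2 S <-> nonstationary lt2 S) -> b_eq_aleph1 T1).
  { intros P2. apply NNPP. intro N4. apply P2. intro S.
    assert (Hb : forall G : T1 -> nat -> nat, exists g, forall xi, le_star (G xi) g).
    { intro G. apply NNPP. intro K. apply N4. split; [exists G; exact K | exact no_nat_unb]. }
    split; [apply (J_NS_bounded T1 lt1 T2 lt2 H1 H2 Hb) | apply (NS_J T2 lt2)]. }
  assert (D1 : m_omega_eq_aleph1 T1 -> b_eq_aleph1 T1).
  { intros [[H HH] _]. split; [exists (fun i x => listmax (H i x)); apply mfam_unb; exact HH | exact no_nat_unb]. }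
  assert (D2 : b_eq_aleph1 T1 -> m_omega_eq_aleph1 T1).
  { intros [[F HF] _]. split; [apply (unb_mfam F HF) | exact no_nat_mfam]. }
  split; [|split]; split; intro K.
  - exact (B K).
  - exact (A (C K)).
  - exact (D2 (C (B K))).
  - exact (A (D1 K)).
  - exact (C (B K)).
  - exact (A K).
Qed.
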